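(* Let $m \ge 1$ and let $A_1,\dots,A_m$ be $d$-dimensional boxes forming a set of Gozinta Boxes, i.e. both the natural order $A_1,A_2,\dots,A_m$ and the reverse order $A_m,\dots,A_1$ (listed from innermost to outermost) are possible arrangements. Fix states of the boxes realizing these two arrangements. Then at least $m-1$ of the boxes are, in at least one of the two arrangements, expanded along their smallest side (a side whose closed length is the minimum closed side length of that box).
   Context: A $d$-dimensional box $A$ has closed side lengths $a_1\le a_2\le\dots\le a_d$ (positive reals). A state of $A$ is either closed (side lengths $a_1,\dots,a_d$) or expanded along one side $i$: the side $a_i$ is replaced by a length $a_i'$ with $a_i\le a_i'\le 2a_i$ (expansion bound), all other sides unchanged; only one side can expand. The dimension vector of a state is its multiset of side lengths sorted in non-decreasing order. A box $X$ in some state fits inside a box $Y$ in some state if every coordinate of the dimension vector of $Y$ is strictly larger than the corresponding coordinate of the dimension vector of $X$. An order $X_1,\dots,X_k$ (innermost to outermost) of a collection of boxes is a possible arrangement if each box can be assigned a state so that $X_j$ fits inside $X_{j+1}$ for all $j$; a box may be in different states in different arrangements. *)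

(* Defs.v *)
From mathcomp Require Import all_boot all_order all_algebra.
Set Implicit Arguments. Unset Strict Implicit. Unset Printing Implicit Defensive.
Import Order.TTheory GRing.Theory Num.Theory.
Local Open Scope ring_scope.

(* A d-dimensional box is given by its closed side lengths, indexed by 'I_d
   (box_ok: all positive).  A state is [None] (closed) or [Some (i, l)]:
   expanded along side i, whose length becomes l. *)
Definition box (R : realFieldType) (d : nat) := 'I_d -> R.
Definition state (R : realFieldType) (d : nat) := option ('I_d * R).

Definition box_ok (R : realFieldType) (d : nat) (a : box R d) : Prop :=
  forall i, 0 < a i.

Definition state_ok (R : realFieldType) (d : nat) (a : box R d) (s : state R d) : Prop :=
  match s with
  | None => True
  | Some (i, l) => a i <= l <= 2 * a i
  end.

Definition side_len (R : realFieldType) (d : nat) (a : box R d) (s : state R d) (j : 'I_d) : R :=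
  match s with
  | Some (i, l) => if j == i then l else a j
  | None => a j
  end.

Definition dimvec (R : realFieldType) (d : nat) (a : box R d) (s : state R d) : seq R :=
  sort <=%R [seq side_len a s j | j <- enum 'I_d].

Definition fits (R : realFieldType) (d : nat) (a : box R d) (s : state R d)
  (b : box R d) (t : state R d) : Prop :=
  all2 (fun x y => x < y) (dimvec a s) (dimvec b t).

Definition expanded_smallest (R : realFieldType) (d : nat) (a : box R d) (s : state R d) : bool :=
  match s with
  | Some (i, _) => [forall j, a i <= a j]
  | None => false
  end.

(* Main.v *)
Require Import Defs.
From mathcomp Require Import all_boot all_order all_algebra.
From mathcomp Require Import zify.
Import Order.TTheory GRing.Theory Num.Theory.
Local Open Scope ring_scope.

Section Aux.
Variables (R : realFieldType) (d : nat).

Definition hd0 (a : box R d) (s : state R d) : R := head 0 (dimvec a s).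

Lemma dimvec_size (a : box R d) s : size (dimvec a s) = d.
Proof. by rewrite /dimvec size_sort size_map size_enum_ord. Qed.

Lemma hd0_mem (a : box R d) s : (0 < d)%N ->
  exists j, hd0 a s = side_len a s j.
Proof.
move=> hd; have : hd0 a s \in dimvec a s.
  rewrite /hd0; case E: (dimvec a s) => [|x t] /=; last by rewrite inE eqxx.
  by have := dimvec_size a s; rewrite E => /= H; rewrite -H in hd.
rewrite /dimvec mem_sort => /mapP [j _ ->]; by exists j.
Qed.

Lemma hd0_le (a : box R d) s j : hd0 a s <= side_len a s j.
Proof.
have : side_len a s j \in dimvec a s.
  by rewrite /dimvec mem_sort; apply: map_f; rewrite mem_enum.
have := sort_le_sorted [seq side_len a s j | j <- enum 'I_d].
rewrite /hd0 /dimvec; case: (sort _ _) => [|x t] //= Hp.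
rewrite inE => /orP [/eqP -> //|Ht].
have := order_path_min (@le_trans _ R) Hp => /allP; exact.
Qed.

Lemma side_len_ge (a : box R d) s j : state_ok a s -> a j <= side_len a s j.
Proof.
case: s => [[i l]|] //= /andP [H1 _].
by case: eqP => [->|_].
Qed.

Lemma hd0_lower (a : box R d) s j0 : (0 < d)%N -> state_ok a s ->
  (forall j, a j0 <= a j) -> a j0 <= hd0 a s.
Proof.
move=> hd ok Hm; have [j ->] := hd0_mem a s hd.
exact: (le_trans (Hm j) (side_len_ge _ _ j ok)).
Qed.

Lemma hd0_upper (a : box R d) s j0 : (forall j, a j0 <= a j) ->
  ~~ expanded_smallest a s -> hd0 a s <= a j0.
Proof.
move=> Hm; have := hd0_le a s j0.
case: s => [[i l]|] //= H Hn.
move: H; case: eqP => // Ej; subst j0.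
by move: Hn; have -> : [forall j, a i <= a j] by apply/forallP.
Qed.

Lemma fits_hd0 (a b : box R d) s t : (0 < d)%N -> fits a s b t ->
  hd0 a s < hd0 b t.
Proof.
move=> hd; rewrite /fits /hd0.
have := dimvec_size a s; have := dimvec_size b t.
case: (dimvec a s) => [|x u]; case: (dimvec b t) => [|y v] //=.
- by move=> _ E; rewrite -E in hd.
- by move=> _ _ /andP [].
Qed.

Lemma chain_lt m (f : 'I_m -> R) :
  (forall i j : 'I_m, val j = (val i).+1 -> f i < f j) ->
  forall i j : 'I_m, (val i < val j)%N -> f i < f j.
Proof.
move=> H i j.
suff K : forall n (Hn : (n < m)%N), (val i < n)%N -> f i < f (Ordinal Hn).
  by case: j => n Hn lt; apply: K.
elim=> [|n IH] Hn //= lt.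
have Hn' : (n < m)%N by apply: ltnW.
have H2 : f (Ordinal Hn') < f (Ordinal Hn) by apply: H.
case: (ltngtP (val i) n) => [lt2| |E].
- exact: lt_trans (IH Hn' lt2) H2.
- by move=> c; move: lt; rewrite ltnS leqNgt c.
- by have -> : i = Ordinal Hn' by apply: val_inj.
Qed.

End Aux.
Arguments hd0 {R d}.

Theorem proposition7 (R : realFieldType) (d m : nat) (A : 'I_m -> box R d)
  (sN sR : 'I_m -> state R d) :
  (0 < d)%N -> (1 <= m)%N ->
  (forall k, box_ok (A k)) ->
  (forall k, state_ok (A k) (sN k)) ->
  (forall k, state_ok (A k) (sR k)) ->
  (* natural order A_1, ..., A_m (innermost to outermost) realized by sN *)
  (forall i j : 'I_m, val j = (val i).+1 -> fits (A i) (sN i) (A j) (sN j)) ->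
  (* reverse order A_m, ..., A_1 realized by sR *)
  (forall i j : 'I_m, val j = (val i).+1 -> fits (A j) (sR j) (A i) (sR i)) ->
  (m - 1 <= #|[set k : 'I_m | expanded_smallest (A k) (sN k)
                              || expanded_smallest (A k) (sR k)]|)%N.
Proof.
move=> hd hm _ okN okR chN chR.
set S := [set k | _].
have Hmin : forall k : 'I_m, exists j0, forall j, A k j0 <= A k j.
  move=> k; case: (arg_minP (A k) (erefl true : predT (Ordinal hd))) => j0 _ H.
  by exists j0 => j; apply: H.
have cN : forall i j : 'I_m, (val i < val j)%N ->
    hd0 (A i) (sN i) < hd0 (A j) (sN j).
  apply: (chain_lt _ _ (fun k => hd0 (A k) (sN k))) => i j e.
  exact: (fits_hd0 _ _ _ _ _ _ hd (chN i j e)).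
have cR : forall i j : 'I_m, (val i < val j)%N ->
    - hd0 (A i) (sR i) < - hd0 (A j) (sR j).
  apply: (chain_lt _ _ (fun k => - hd0 (A k) (sR k))) => i j e.
  rewrite ltrN2; exact: (fits_hd0 _ _ _ _ _ _ hd (chR i j e)).
have key : forall j k : 'I_m, j \notin S -> k \notin S -> (val j < val k)%N -> False.
  move=> j k; rewrite !inE !negb_or => /andP [jN jR] /andP [kN kR] lt.
  have [j0 Hj] := Hmin j; have [k0 Hk] := Hmin k.
  have h1 := hd0_lower _ _ (A j) (sN j) j0 hd (okN j) Hj.
  have h2 := hd0_upper _ _ (A k) (sN k) k0 Hk kN.
  have h3 := hd0_lower _ _ (A k) (sR k) k0 hd (okR k) Hk.
  have h4 := hd0_upper _ _ (A j) (sR j) j0 Hj jR.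
  have h5 := cN j k lt; have h6 := cR j k lt.
  rewrite ltrN2 in h6.
  have : A j j0 < A k k0 by apply: le_lt_trans h1 (lt_le_trans h5 h2).
  have : A k k0 < A j j0 by apply: le_lt_trans h3 (lt_le_trans h6 h4).
  by move=> a b; have := lt_trans a b; rewrite ltxx.
have C1 : (#|~: S| <= 1)%N.
  apply/card_le1_eqP => j k; rewrite !inE => Hj Hk.
  apply: val_inj; case: (ltngtP (val j) (val k)) => // c.
  - by exfalso; apply: (key j k) => //; rewrite ?inE.
  - by exfalso; apply: (key k j) => //; rewrite ?inE.
have := cardsC S; rewrite card_ord => E.
move: C1 E; lia.
Qed.
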